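(* Let $A\in\mathbb{R}^{n\times n}$ be an invertible M-matrix, partitioned as $A=\begin{bmatrix} A_{11} & A_{12}\\ A_{21} & A_{22}\end{bmatrix}$ with $A_{11}\in\mathbb{R}^{k\times k}$ and $A_{22}\in\mathbb{R}^{(n-k)\times(n-k)}$. Let $M_{11},N_{11}\in\mathbb{R}^{k\times k}$ and $M_{22},N_{22}\in\mathbb{R}^{(n-k)\times(n-k)}$, and suppose that both pairs \[ M = \begin{bmatrix} M_{11} & 0\\ A_{21} & M_{22}\end{bmatrix},\quad N = \begin{bmatrix} N_{11} & -A_{12}\\ 0 & N_{22}\end{bmatrix} \qquad\text{and}\qquad \hat{M} = \begin{bmatrix} M_{11} & A_{12}\\ 0 & M_{22}\end{bmatrix},\quad \hat{N} = \begin{bmatrix} N_{11} & 0\\ -A_{21} & N_{22}\end{bmatrix} \] are regular splittings of $A$. Then $\hat{M}^{-1}\hat{N}$ and $M^{-1}N$ have the same eigenvalues, and hence the same spectral radius.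
   Context: A regular splitting of $A$ is a pair $(M,N)$ with $M$ an invertible M-matrix, $N\geq 0$ entrywise, and $A=M-N$. The spectral radius $\rho(P)$ is the maximum modulus of the eigenvalues of $P$. *)

(* Defs.v *)
From HB Require Import structures.
From mathcomp Require Import all_boot all_order all_algebra.
From mathcomp Require Import complex.
Set Implicit Arguments. Unset Strict Implicit. Unset Printing Implicit Defensive.
Import Order.TTheory GRing.Theory Num.Theory.
Local Open Scope ring_scope.
Local Open Scope complex_scope.

(* Matrices are real in the sense of an arbitrary real closed field R;
   eigenvalues are taken in the algebraic closure R[i] = complex R. *)

Definition ceig (R : rcfType) (n : nat) (P : 'M[R]_n) (z : R[i]) : Prop :=
  eigenvalue (map_mx (fun x : R => x%:C) P) z.

Definition is_spectral_radius (R : rcfType) (n : nat) (P : 'M[R]_n) (r : R) : Prop :=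
  (exists2 z, ceig P z & `|z| = r%:C) /\ (forall z, ceig P z -> `|z| <= r%:C).

Definition nonneg_mx (R : rcfType) (m n : nat) (B : 'M[R]_(m, n)) : Prop :=
  forall i j, 0 <= B i j.

Definition inv_Mmatrix (R : rcfType) (n : nat) (A : 'M[R]_n) : Prop :=
  exists s : R, exists B : 'M[R]_n,
    [/\ 0 < s, nonneg_mx B, A = s%:M - B &
        forall z, ceig B z -> `|z| < s%:C].

Definition regular_splitting (R : rcfType) (n : nat) (A M N : 'M[R]_n) : Prop :=
  [/\ inv_Mmatrix M, nonneg_mx N & A = M - N].

(* Main.v *)
Require Import Defs.
From HB Require Import structures.
From mathcomp Require Import all_boot all_order all_algebra.
From mathcomp Require Import complex.
Import Order.TTheory GRing.Theory Num.Theory.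
Local Open Scope ring_scope.

Lemma eigen_det (F : fieldType) n (g : 'M[F]_n) a :
  eigenvalue g a = (\det (g - a%:M) == 0).
Proof. by rewrite /eigenvalue /eigenspace kermx_eq0 row_free_unit unitmxE unitfE negbK. Qed.

Lemma eig_split (F : fieldType) n (M N : 'M[F]_n) z : M \in unitmx ->
  eigenvalue (invmx M *m N) z = (\det (N - z *: M) == 0).
Proof.
move=> uM; rewrite eigen_det.
have -> : invmx M *m N - z%:M = invmx M *m (N - z *: M).
  by rewrite mulmxBr -scalemxAr mulVmx // scalemx1.
have /negbTE h : \det (invmx M) != 0 by rewrite -unitfE -unitmxE unitmx_inv.
by rewrite det_mulmx mulf_eq0 h.
Qed.

Lemma key (F : fieldType) k l (M11 N11 : 'M[F]_k) (A12 : 'M[F]_(k,l)) A21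
  (M22 N22 : 'M[F]_l) (z : F) :
  (\det (block_mx N11 (-A12) 0 N22 - z *: block_mx M11 0 A21 M22) == 0) =
  (\det (block_mx N11 0 (-A21) N22 - z *: block_mx M11 A12 0 M22) == 0).
Proof.
rewrite !scale_block_mx !opp_block_mx !add_block_mx !scaler0 !oppr0 !addr0 !add0r.
have [->|z0] := eqVneq z 0.
  by rewrite !scale0r !oppr0 !addr0 det_ublock det_lblock.
set a := N11 - _; set d := N22 - _.
pose D : 'M[F]_(k + l) := block_mx z%:M 0 0 1%:M.
have dD : \det D = z ^+ k by rewrite det_ublock det1 mulr1 det_scalar.
have E : D *m block_mx a (- A12) (- (z *: A21)) d =
         block_mx a (- (z *: A12)) (- A21) d *m D.
  rewrite !mulmx_block !mulmx0 !mul0mx !addr0 !add0r !mulmx1 !mul1mx.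
  by rewrite !mul_scalar_mx !mul_mx_scalar !scalerN.
have := congr1 determinant E; rewrite !det_mulmx dD [_ * z ^+ k]mulrC => /mulfI.
by move=> -> //; rewrite expf_neq0.
Qed.


Lemma eqb_iff (a b : bool) : a = b -> (a <-> b). Proof. by move->. Qed.

Lemma key_eig (F : fieldType) k l (M11 N11 : 'M[F]_k) (A12 B12 O12 O12' : 'M[F]_(k,l))
  (A21 B21 O21 O21' : 'M[F]_(l,k)) (M22 N22 : 'M[F]_l) (z : F) :
  B12 = - A12 -> B21 = - A21 -> O12 = 0 -> O21 = 0 -> O12' = 0 -> O21' = 0 ->
  block_mx M11 O12' A21 M22 \in unitmx -> block_mx M11 A12 O21 M22 \in unitmx ->
  eigenvalue (invmx (block_mx M11 A12 O21 M22) *m block_mx N11 O12 B21 N22) z =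
  eigenvalue (invmx (block_mx M11 O12' A21 M22) *m block_mx N11 B12 O21' N22) z.
Proof.
move=> -> -> -> -> -> -> u1 u2.
by rewrite !eig_split // key.
Qed.

Local Open Scope complex_scope.
Lemma Mmx_unit (R : rcfType) n (M : 'M[R]_n) : inv_Mmatrix M -> M \in unitmx.
Proof.
case=> s [B [s0 _ -> hB]].
apply/negPn/negP => h.
have : ceig B s%:C.
  rewrite /ceig.
  change (eigenvalue (map_mx (real_complex R) B) (real_complex R s)).
  rewrite eigen_det -map_scalar_mx -map_mxB det_map_mx.
  have -> : B - s%:M = (-1) *: (s%:M - B) by rewrite scaleN1r opprB.
  move: h; rewrite unitmxE unitfE negbK detZ => /eqP ->.
  by rewrite mulr0 rmorph0.
move/hB; rewrite ger0_norm ?ltxx // lecR ltW //.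
Qed.

Lemma ceig_split (R : rcfType) n (M N : 'M[R]_n) z : M \in unitmx ->
  ceig (invmx M *m N) z <->
  (\det (map_mx (real_complex R) N - z *: map_mx (real_complex R) M) == 0).
Proof.
move=> uM; rewrite /ceig.
change (is_true (eigenvalue (map_mx (real_complex R) (invmx M *m N)) z) <->
  (\det (map_mx (real_complex R) N - z *: map_mx (real_complex R) M) == 0)).
by rewrite map_mxM map_invmx eig_split ?map_unitmx.
Qed.

Theorem lemma2 (R : rcfType) (k l : nat)
  (A11 M11 N11 : 'M[R]_k) (A12 : 'M[R]_(k, l)) (A21 : 'M[R]_(l, k))
  (A22 M22 N22 : 'M[R]_l) :
  inv_Mmatrix (block_mx A11 A12 A21 A22) ->
  regular_splitting (block_mx A11 A12 A21 A22)
    (block_mx M11 0 A21 M22) (block_mx N11 (- A12) 0 N22) ->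
  regular_splitting (block_mx A11 A12 A21 A22)
    (block_mx M11 A12 0 M22) (block_mx N11 0 (- A21) N22) ->
  let P := invmx (block_mx M11 0 A21 M22) *m block_mx N11 (- A12) 0 N22 in
  let Ph := invmx (block_mx M11 A12 0 M22) *m block_mx N11 0 (- A21) N22 in
  (forall z, ceig Ph z <-> ceig P z) /\
  (forall r, is_spectral_radius Ph r <-> is_spectral_radius P r).
Proof.
move=> _ [hM _ _] [hMh _ _] P Ph.
have E z : ceig Ph z <-> ceig P z.
  have u1 := Mmx_unit _ _ _ hM; have u2 := Mmx_unit _ _ _ hMh.
  rewrite /ceig /P /Ph.
  set f := real_complex R.
  change (is_true (eigenvalue (map_mx f (invmx (block_mx M11 A12 0 M22) *m block_mx N11 0 (- A21) N22)) z) <->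
    is_true (eigenvalue (map_mx f (invmx (block_mx M11 0 A21 M22) *m block_mx N11 (- A12) 0 N22)) z)).
  rewrite !map_mxM !map_invmx !map_block_mx.
  apply: eqb_iff; apply: key_eig.
  all: try (by rewrite map_mxN); try (by rewrite map_mx0).
  - by move: u1; rewrite -(map_unitmx (real_complex R)) map_block_mx.
  - by move: u2; rewrite -(map_unitmx (real_complex R)) map_block_mx.
split; first exact: E.
move=> r; split.
  case=> [[z hz hr] h]; split.
    exists z; [exact: (proj1 (E z) hz) | exact: hr].
  move=> z' hz'; apply: h; exact: (proj2 (E z') hz').
case=> [[z hz hr] h]; split.
  exists z; [exact: (proj2 (E z) hz) | exact: hr].
move=> z' hz'; apply: h; exact: (proj1 (E z') hz').
Qed.
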